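(* Let $f$ be a PSR with core test sets $\{\mathcal{U}_h\}_{h\in[H]}$ such that every $o\in\mathcal{O}$ (as a length-one test) belongs to $\mathcal{U}_H$, with parameters $\{M_{o,a,h;f},q_{0;f}\}$ and $m_{o,H;f}=e_{o}$ (the standard basis vector of $\mathbb{R}^{|\mathcal{U}_H|}$ indexing $o$). Define new parameters $\{M_{o,a,h;f'},q_{0;f}\}$ by letting, for all $o\in\mathcal{O},a\in\mathcal{A},h\in[H-1],u\in\mathcal{U}_{h+1}$, the row $m_{(o,a,u),h;f'}$ be the orthogonal projection of $m_{(o,a,u),h;f}$ onto the column space of $K_{h-1;f}$, and set $\mathbb{P}^\pi_{f'}(\tau_H):=e_{o_H}^\top M_{o_{H-1},a_{H-1},H-1;f'}\cdots M_{o_1,a_1,1;f'}q_{0;f}\,\pi(\tau_H)$. Then $\mathbb{P}^\pi_f(\tau_H)=\mathbb{P}^\pi_{f'}(\tau_H)$ for every trajectory $\tau_H$ and every policy $\pi$.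
   Context: Process (model $f$) with finite $\mathcal{O},\mathcal{A}$, horizon $H$; histories $\tau_h=(o_1,a_1,\dots,o_h,a_h)$; a policy $\pi$ picks $a_h\sim\pi_h(\cdot\mid\tau_{h-1},o_h)$, $\pi(\tau_h)=\prod_{l\le h}\pi_l(a_l\mid\tau_{l-1},o_l)$, $\mathbb{P}^\pi_f(\tau_h)$ is the probability of $\tau_h$ under $\pi$ in $f$. A test starting at step $h$ is $t=(o_h,\dots,o_{h+W-1},a_h,\dots,a_{h+W-2})$; $\mathbb{P}_f(t\mid\tau_{h-1})$ is the probability of observing $o_{h:h+W-1}$ when executing $a_{h:h+W-2}$ after $\tau_{h-1}$ ($0$ if unreachable). A set $\mathcal{U}_h$ of tests starting at $h$ is a core test set if for every test $t$ starting at $h$ there is a history-independent $m_{t,h;f}$ with $\mathbb{P}_f(t\mid\tau_{h-1})=\langle m_{t,h;f},q_{\tau_{h-1};f}\rangle$, $q_{\tau_{h-1};f}=[\mathbb{P}_f(u\mid\tau_{h-1})]_{u\in\mathcal{U}_h}$; $q_{0;f}=[\mathbb{P}_f(u)]_{u\in\mathcal{U}_1}$; $M_{o,a,h;f}$ has rows $m_{(o,a,u),h;f}^\top$, $u\in\mathcal{U}_{h+1}$. Let $d_{\mathrm{PSR},h}$ be the rank of the matrix with entries $\mathbb{P}_f(t\mid\tau_h)$ (rows: tests starting at $h+1$; columns: histories $\tau_h$). Core matrix: for $h\ge1$, $K_{h;f}$ has columns $q_{\tau_h^1;f},\dots,q_{\tau_h^{d_{\mathrm{PSR},h}};f}$ for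 histories whose predictive states span all $q_{\tau_h;f}$ (chosen to minimize $\|K_{h;f}^\dagger\|_{1\to1}$); $K_{0;f}=q_{0;f}$. *)

(* Defs.v *)
From HB Require Import structures.
From mathcomp Require Import all_boot all_order all_algebra.
Set Implicit Arguments. Unset Strict Implicit. Unset Printing Implicit Defensive.
Import Order.TTheory GRing.Theory Num.Theory.
Local Open Scope ring_scope.

Section PSR.
Variables (R : realFieldType) (O A : finType).

Definition hist := seq (O * A).
(* A test (o_h..o_{h+W-1}, a_h..a_{h+W-2}) *)
Definition test := (seq O * seq A)%type.
(* A model f : conditional law of o_h given tau_{h-1} *)
Definition kernel := hist -> O -> R.
(* A policy pi_h(a_h | tau_{h-1}, o_h) *)
Definition policy := hist -> O -> A -> R.

Definition is_model (H : nat) (f : kernel) :=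
  forall tau : hist, (size tau < H)%N ->
    (forall o, 0 <= f tau o) /\ \sum_o f tau o = 1.

Definition is_policy (H : nat) (pi : policy) :=
  forall (tau : hist) (o : O), (size tau < H)%N ->
    (forall a, 0 <= pi tau o a) /\ \sum_a pi tau o a = 1.

Fixpoint seqP (f : kernel) (tau : hist) (os : seq O) (as_ : seq A) : R :=
  match os, as_ with
  | [::], _ => 1
  | [:: o], _ => f tau o
  | o :: os', a :: as' => f tau o * seqP f (rcons tau (o, a)) os' as'
  | _ :: _, [::] => 0
  end.

Definition histP (f : kernel) (tau : hist) : R :=
  seqP f [::] (unzip1 tau) (unzip2 tau).

(* P_f(t | tau), 0 if tau unreachable *)
Definition Ptest (f : kernel) (t : test) (tau : hist) : R :=
  if histP f tau == 0 then 0 else seqP f tau t.1 t.2.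

(* P^pi_f(tau) (tau0 = already executed prefix) *)
Fixpoint trajP (f : kernel) (pi : policy) (tau0 tau : hist) : R :=
  match tau with
  | [::] => 1
  | (o, a) :: tau' => f tau0 o * pi tau0 o a * trajP f pi (rcons tau0 (o, a)) tau'
  end.

Fixpoint polP (pi : policy) (tau0 tau : hist) : R :=
  match tau with
  | [::] => 1
  | (o, a) :: tau' => pi tau0 o a * polP pi (rcons tau0 (o, a)) tau'
  end.

Definition is_test (H h : nat) (t : test) : bool :=
  [&& (0 < size t.1)%N, size t.2 == (size t.1).-1 & (h + size t.1 <= H.+1)%N].

Definition test0 : test := ([::], [::]).

(* orthogonal projection (acting on row vectors) onto the column space of K *)
Definition orthproj n k (K : 'M[R]_(n, k)) : 'M[R]_n := proj_mx (<<K^T>>)%MS (kermx K).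

Section Params.
Variables (f : kernel) (U : nat -> seq test)
  (m : forall h, test -> 'rV[R]_(size (U h))).

Definition qv (h : nat) (tau : hist) : 'cV[R]_(size (U h)) :=
  \col_i Ptest f (nth test0 (U h) i) tau.

Definition Mmx (h : nat) (o : O) (a : A) : 'M[R]_(size (U h.+1), size (U h)) :=
  \matrix_(i, j) m h (o :: (nth test0 (U h.+1) i).1,
                      a :: (nth test0 (U h.+1) i).2) 0 j.

(* Kc h plays the role of K_{h-1;f} *)
Variables (k : nat -> nat) (Kc : forall h, 'M[R]_(size (U h), k h)).

Definition Mmx' (h : nat) (o : O) (a : A) : 'M[R]_(size (U h.+1), size (U h)) :=
  Mmx h o a *m orthproj (Kc h).

(* for r = rev (tau_l): M'_{o_l,a_l,l} ... M'_{o_1,a_1,1} q_0 *)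
Fixpoint pstate (r : hist) : 'cV[R]_(size (U (size r).+1)) :=
  match r return 'cV[R]_(size (U (size r).+1)) with
  | [::] => qv 1 [::]
  | x :: l => Mmx' (size l).+1 x.1 x.2 *m pstate l
  end.

Definition readout (n : nat) (v : 'cV[R]_(size (U n))) (t : test) : R :=
  match (insub (index t (U n)) : option 'I_(size (U n))) with
  | Some i => v i 0
  | None => 0
  end.

Definition Pf' (pi : policy) (tau' : hist) (oH : O) (aH : A) : R :=
  readout (pstate (rev tau')) ([:: oH], [::]) * polP pi [::] (rcons tau' (oH, aH)).

End Params.
End PSR.

(* Main.v *)
Require Import Defs.
From HB Require Import structures.
From mathcomp Require Import all_boot all_order all_algebra zify.
Import Order.TTheory GRing.Theory Num.Theory.
Local Open Scope ring_scope.

Lemma cap_orth (R : realFieldType) n k (K : 'M[R]_(n, k)) :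
  (<<K^T>> :&: kermx K)%MS = 0.
Proof.
apply/row_matrixP => i; rewrite row0.
set v := row i _.
have : (v <= <<K^T>> :&: kermx K)%MS by apply: row_sub.
rewrite sub_capmx genmxE sub_kermx => /andP[/submxP[w ->] /eqP vK].
set v' := w *m K^T.
have hv : v' *m v'^T = 0 by rewrite /v' trmx_mul trmxK mulmxA vK mul0mx.
apply/rowP => j; rewrite mxE.
have := congr1 (fun M : 'M[R]_1 => M 0 0) hv; rewrite !mxE => /eqP.
rewrite psumr_eq0; last by move=> l _; rewrite !mxE -expr2 sqr_ge0.
move=> /allP /(_ j (mem_index_enum j)); rewrite implyTb [v'^T _ _]mxE mulf_eq0 orbb => /eqP; rewrite /v' mxE.
done.
Qed.

Lemma orthproj_fix (R : realFieldType) n k (K : 'M[R]_(n, k)) p (M : 'M_(p, n)) (b : 'cV_n) :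
  (b^T <= K^T)%MS -> M *m orthproj K *m b = M *m b.
Proof.
move=> /submxP[D hD].
have hb : b = K *m D^T by rewrite -[b]trmxK hD trmx_mul trmxK.
have full : (M <= <<K^T>> + kermx K)%MS.
  apply: submx_full; rewrite /row_full mxrank_disjoint_sum ?cap_orth //.
  rewrite genmxE mxrank_tr mxrank_ker subnKC //; exact: rank_leq_row.
have := proj_mx_compl_sub full; rewrite sub_kermx => /eqP h0.
apply/eqP; rewrite -subr_eq0 -mulmxBl -opprB mulNmx oppr_eq0.
by rewrite /orthproj hb mulmxA h0 mul0mx.
Qed.

Section Main.
Variables (R : realFieldType) (O A : finType).

Fixpoint prodf (f : kernel R O A) (t tau : hist O A) : R :=
  match tau with
  | [::] => 1
  | (o, a) :: tau' => f t o * prodf f (rcons t (o, a)) tau'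
  end.

Lemma seqP_prodf f tau : forall t, seqP f t (unzip1 tau) (unzip2 tau) = prodf f t tau.
Proof.
elim: tau => [|[o a] tau IH] t //=.
case: tau IH => [|[o' a'] tau] IH /=; first by rewrite mulr1.
by move: (IH (rcons t (o, a))) => /= ->.
Qed.

Lemma prodf_rcons f tau : forall t x,
  prodf f t (rcons tau x) = prodf f t tau * f (t ++ tau) x.1.
Proof.
elim: tau => [|[o a] tau IH] t [o' a'] /=; first by rewrite mul1r mulr1 cats0.
by rewrite IH mulrA cat_rcons.
Qed.

Lemma trajP_prodf f pi tau : forall t, trajP f pi t tau = prodf f t tau * polP pi t tau.
Proof.
elim: tau => [|[o a] tau IH] t /=; first by rewrite mulr1.
rewrite IH !mulrA; congr (_ * _); rewrite -!mulrA; congr (_ * _); exact: mulrC.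
Qed.

Lemma histP_rcons (f : kernel R O A) (tau : hist O A) x : histP f (rcons tau x) = histP f tau * f tau x.1.
Proof. by rewrite /histP !seqP_prodf prodf_rcons. Qed.

Lemma mul_if (c s : R) : c * s = c * (if c == 0 then 0 else s).
Proof. by case: eqP => [->|]; rewrite ?mul0r. Qed.

End Main.

Theorem lemma6 (R : realFieldType) (O A : finType) (H : nat)
  (f : kernel R O A) (U : nat -> seq (test O A))
  (m : forall h, test O A -> 'rV[R]_(size (U h)))
  (k : nat -> nat) (Kc : forall h, 'M[R]_(size (U h), k h)) :
  (0 < H)%N ->
  is_model H f ->
  (* core test sets: finite sets of tests starting at h *)
  (forall h, (1 <= h <= H)%N -> uniq (U h) /\ all (is_test H h) (U h)) ->
  (* linear representation of all test probabilities *)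
  (forall h, (1 <= h <= H)%N -> forall t, is_test H h t ->
     forall tau : hist O A, size tau = h.-1 ->
       Ptest f t tau = (m h t *m qv f U h tau) 0 0) ->
  (* every observation is a core test at step H, with m_{o,H} = e_o *)
  (forall o : O, ([:: o], [::]) \in U H) ->
  (forall (o : O) (i : 'I_(size (U H))),
     nth (test0 O A) (U H) i = ([:: o], [::]) -> m H ([:: o], [::]) = delta_mx 0 i) ->
  (* Kc h = K_{h-1;f}: columns are predictive states q_{tau_{h-1}} spanning all of them *)
  (forall h, (1 <= h < H)%N ->
     (forall j, exists tau : hist O A, size tau = h.-1 /\ col j (Kc h) = qv f U h tau) /\
     (forall tau : hist O A, size tau = h.-1 -> ((qv f U h tau)^T <= (Kc h)^T)%MS)) ->
  forall pi : policy R O A, is_policy H pi ->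
  forall (tau' : hist O A) (oH : O) (aH : A), size tau' = H.-1 ->
    trajP f pi [::] (rcons tau' (oH, aH)) = Pf' f m Kc pi tau' oH aH.
Proof.
move=> H0 _ Uh Lin Umem _ Kh pi _ tau' oH aH hs.
have step : forall r : hist O A, (size r < H)%N -> forall i,
    pstate f m Kc r i 0 = histP f (rev r) * Ptest f (nth (test0 O A) (U (size r).+1) i) (rev r).
  elim => [|[o a] l IH] hl i.
    by rewrite /= mxE /histP /= mul1r.
  have hl' : (size l < H)%N by apply: ltn_trans hl.
  have vec : pstate f m Kc l = histP f (rev l) *: qv f U (size l).+1 (rev l).
    by apply/matrixP => p q; rewrite (ord1 q) IH // !mxE.
  have hK := (Kh (size l).+1).
  have [_ hK2] : (forall j, exists tau : hist O A, size tau = (size l).+1.-1 /\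
        col j (Kc (size l).+1) = qv f U (size l).+1 tau) /\
     (forall tau : hist O A, size tau = (size l).+1.-1 ->
        ((qv f U (size l).+1 tau)^T <= (Kc (size l).+1)^T)%MS).
    by apply: hK; rewrite hl.
  have sub : ((pstate f m Kc l)^T <= (Kc (size l).+1)^T)%MS.
    by rewrite vec linearZ /= scalemx_sub // hK2 // size_rev.
  rewrite /= /Mmx' orthproj_fix // vec -scalemxAr mxE.
  set u := nth (test0 O A) (U (size l).+2) i.
  have uin : u \in U (size l).+2 by apply: mem_nth.
  have [_ /allP/(_ u uin)] := Uh (size l).+2 ltac:(by rewrite hl).
  rewrite /is_test => /and3P[u1 u2 u3].
  have rowM : row i (Mmx m (size l).+1 o a) = m (size l).+1 (o :: u.1, a :: u.2).
    by apply/rowP => j; rewrite !mxE.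
  have -> : (Mmx m (size l).+1 o a *m qv f U (size l).+1 (rev l)) i 0 =
      (row i (Mmx m (size l).+1 o a) *m qv f U (size l).+1 (rev l)) 0 0.
    by rewrite -row_mul !mxE.
  rewrite rowM -Lin; first last.
  - by rewrite size_rev.
  - rewrite /is_test /=; apply/andP; split; last by lia.
    move: u2 u1.
    by case: (u.1) => // ? ? /eqP -> _.
  - exact: ltnW hl.
  rewrite /= rev_cons histP_rcons /= [RHS]mul_if /Ptest.
  rewrite -[LHS]mul_if /= histP_rcons /=.
  move: u1; case: (u.1) => [//|o1 u1'] _.
  rewrite mulrA; case: eqP => [->|_]; by rewrite ?mul0r.
move=> {Kh Lin Uh}.
have hr : (size (rev tau') < H)%N by rewrite size_rev hs prednK.
have mem : ([:: oH], [::]) \in U (size (rev tau')).+1 by rewrite size_rev hs prednK.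
rewrite trajP_prodf /Pf' /readout; congr (_ * _).
case: insubP => [i _ hi|]; last by rewrite index_mem mem.
rewrite step // hi nth_index // revK prodf_rcons cat0s /histP seqP_prodf /Ptest /histP seqP_prodf /=.
by case: eqP => [->|]; rewrite ?mul0r.
Qed.
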